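(* Let $a:[0,1]\to[0,\infty)$ be a bounded measurable function (so $a\in L^\infty(0,1)$ and $a\ge 0$). There exist constants $T_0>0$ and $\kappa_0>0$, independent of $N$ (equivalently of $h=1/(N+1)$), such that for every integer $N\ge1$, every $T>T_0$ and all $U^0_h,U^1_h\in\mathbb{C}^N$, the solution $U_h=[u_j]_{1\le j\le N}$ of $$M_hU_h''(t)+K_hU_h(t)+L_hU_h(t)=0\quad (t\in(0,T)),\qquad U_h(0)=U_h^0,\ U_h'(0)=U_h^1,$$ satisfies $$\int_0^T\left(\left|\frac{u_1(t)}{h}\right|^2+\left|\frac{u_1'(t)}{2}\right|^2\right)dt\ \ge\ \kappa_0\left(\|U_h^0\|_1^2+\|U_h^1\|_M^2\right).$$
   Context: For an integer $N\ge1$ let $h=1/(N+1)$ and $x_j=jh$, $0\le j\le N+1$; set $a_j=a(x_j)$. Define the $N\times N$ real matrices $K_h=\frac1h\,\mathrm{tridiag}(-1,2,-1)$ (diagonal entries $2/h$, entries $-1/h$ on the first sub- and super-diagonals, zero elsewhere), $M_h=\frac h4\,\mathrm{tridiag}(1,2,1)$ (diagonal $h/2$, off-diagonal neighbours $h/4$), and $L_h=h\,\mathrm{diag}(a_1,\dots,a_N)$. On $\mathbb{C}^N$ let $\langle U,W\rangle=\sum_j u_j\overline{w_j}$ be the canonical inner product, and define $\langle U,W\rangle_1=\langle (K_h+L_h)U,W\rangle$ and $\langle U,W\rangle_M=\langle M_hU,W\rangle$, with associated norms $\|\cdot\|_1$, $\|\cdot\|_M$. *)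

(* Defs.v *)
From Stdlib Require Import Reals.
From mathcomp Require Import classical_sets reals Rstruct Rstruct_topology.
From mathcomp Require Import measure lebesgue_stieltjes_measure lebesgue_measure.
From Coquelicot Require Import Coquelicot.

Local Open Scope R_scope.

(* Stdlib's R seen as a realType, carrying the Borel/Lebesgue measurable structure *)
Definition Rmeas : realType := R.

Definition measurable_on_01 (a : R -> R) : Prop :=
  measurable_fun [set x : Rmeas | 0 <= x <= 1] (a : Rmeas -> Rmeas).

Definition hN (N : nat) : R := / INR (N + 1).

(* A vector of C^N is represented as a map nat -> C; only indices 1..N matter.
   [ext N U] extends it by the Dirichlet convention u_0 = u_{N+1} = 0
   (and 0 outside 1..N), which encodes the tridiagonal structure. *)
Definition ext (N : nat) (U : nat -> C) (j : nat) : C :=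
  if andb (Nat.leb 1 j) (Nat.leb j N) then U j else RtoC 0.

(* K_h = (1/h) tridiag(-1,2,-1) *)
Definition Kop (N : nat) (U : nat -> C) (j : nat) : C :=
  Cmult (RtoC (/ hN N))
    (Cminus (Cminus (Cmult (RtoC 2) (ext N U j)) (ext N U (j - 1))) (ext N U (j + 1))).

(* M_h = (h/4) tridiag(1,2,1) *)
Definition Mop (N : nat) (U : nat -> C) (j : nat) : C :=
  Cmult (RtoC (hN N / 4))
    (Cplus (Cplus (ext N U (j - 1)) (Cmult (RtoC 2) (ext N U j))) (ext N U (j + 1))).

(* L_h = h diag(a(x_1),...,a(x_N)),  x_j = j h *)
Definition Lop (N : nat) (a : R -> R) (U : nat -> C) (j : nat) : C :=
  Cmult (RtoC (hN N * a (INR j * hN N))) (ext N U j).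

Fixpoint csum (f : nat -> C) (n : nat) : C :=
  match n with
  | O => RtoC 0
  | S m => Cplus (csum f m) (f (S m))
  end.

Definition cinner (N : nat) (U W : nat -> C) : C :=
  csum (fun j => Cmult (U j) (Cconj (W j))) N.

(* ||U||_1^2 = <(K_h+L_h)U,U>  (a real number; we take its real part) *)
Definition norm1_sq (N : nat) (a : R -> R) (U : nat -> C) : R :=
  Re (cinner N (fun j => Cplus (Kop N U j) (Lop N a U j)) U).

Definition normM_sq (N : nat) (U : nat -> C) : R :=
  Re (cinner N (Mop N U) U).

Definition is_solution (N : nat) (a : R -> R) (T : R) (U0 U1 : nat -> C)
    (u du ddu : nat -> R -> C) : Prop :=
  (forall j t, (1 <= j <= N)%nat -> is_derive (u j) t (du j t)) /\
  (forall j t, (1 <= j <= N)%nat -> is_derive (du j) t (ddu j t)) /\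
  (forall t, 0 < t < T -> forall j, (1 <= j <= N)%nat ->
     Cplus (Cplus (Mop N (fun k => ddu k t) j) (Kop N (fun k => u k t) j))
           (Lop N a (fun k => u k t) j) = RtoC 0) /\
  (forall j, (1 <= j <= N)%nat -> u j 0 = U0 j /\ du j 0 = U1 j).

Definition observation (N : nat) (T : R) (u du : nat -> R -> C) : R :=
  RInt (fun t => (Cmod (u 1%nat t) / hN N) ^ 2 + (Cmod (du 1%nat t) / 2) ^ 2) 0 T.

(* Main.v *)
Require Import Defs.
From Stdlib Require Import Reals.
From Coquelicot Require Import Coquelicot.
From Stdlib Require Import Lra Lia Psatz.
Local Open Scope R_scope.


Fixpoint lsum (f : nat -> R) (n : nat) : R :=
  match n with O => 0 | S m => lsum f m + f m end.

Lemma lsum_ext f g n : (forall k, (k < n)%nat -> f k = g k) -> lsum f n = lsum g n.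
Proof. induction n; intros H; simpl; auto. rewrite IHn; [rewrite H; auto|]; intros; apply H; lia. Qed.

Lemma lsum_plus f g n : lsum (fun k => f k + g k) n = lsum f n + lsum g n.
Proof. induction n; simpl; [lra|rewrite IHn; lra]. Qed.

Lemma lsum_scal c f n : lsum (fun k => c * f k) n = c * lsum f n.
Proof. induction n; simpl; [lra|rewrite IHn; lra]. Qed.

Lemma lsum_le f g n : (forall k, (k < n)%nat -> f k <= g k) -> lsum f n <= lsum g n.
Proof. induction n; intros H; simpl; [lra|]. assert (f n <= g n) by (apply H; lia).
 assert (lsum f n <= lsum g n) by (apply IHn; intros; apply H; lia). lra. Qed.

Lemma lsum_nonneg f n : (forall k, (k < n)%nat -> 0 <= f k) -> 0 <= lsum f n.
Proof. intros H. replace 0 with (lsum (fun _ => 0) n). apply lsum_le; auto.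
 induction n; simpl; auto. rewrite IHn; [lra|intros; apply H; lia]. Qed.

Lemma lsum_const c n : lsum (fun _ => c) n = INR n * c.
Proof. induction n; simpl lsum; [simpl; lra|rewrite IHn, S_INR; lra]. Qed.

Lemma lsum_mono f m n : (forall k, (k < n)%nat -> 0 <= f k) -> (m <= n)%nat -> lsum f m <= lsum f n.
Proof. intros H Hmn. induction Hmn; [lra|]. simpl. assert (0 <= f m0) by (apply H; lia).
 assert (lsum f m <= lsum f m0) by (apply IHHmn; intros; apply H; lia). lra. Qed.

Lemma lsum_tele x n : lsum (fun c => x (S c) - x c) n = x n - x O.
Proof. induction n; simpl; [lra|rewrite IHn; lra]. Qed.

Lemma lsum_CS f n : (lsum f n)^2 <= INR n * lsum (fun k => f k ^2) n.
Proof.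
 induction n; cbn [lsum]; [simpl; lra|].
 rewrite S_INR. set (s := lsum f n) in *. set (S2 := lsum (fun k => f k ^2) n) in *.
 assert (0 <= S2) by (apply lsum_nonneg; intros; nra).
 assert (0 <= INR n) by apply pos_INR.
 destruct (Req_dec (INR n) 0) as [E|E].
 - rewrite E in IHn. assert (s = 0) by (apply Rsqr_0_uniq; apply Rle_antisym; [unfold Rsqr; nra | apply Rle_0_sqr]).
   rewrite H1, E. nra.
 - assert (0 < INR n) by lra.
   assert (0 <= (s - INR n * f n)^2) by apply pow2_ge_0.
   assert (INR n * (2 * s * f n) <= INR n * (INR n * f n ^2 + S2)) by nra.
   assert (2 * s * f n <= INR n * f n ^2 + S2).
   { apply Rmult_le_reg_l with (INR n); lra. }
   nra.
Qed.

Lemma pol1 x y n : x O = 0 -> y O = 0 ->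
  lsum (fun c => (x (S c) - x c) * (y (S c) - y c)) (S n) =
  lsum (fun k => y (S k) * (2 * x (S k) - x k - x (S (S k)))) n + y (S n) * (x (S n) - x n).
Proof. intros Hx Hy. induction n.
 - simpl. rewrite Hx, Hy. ring.
 - change (lsum (fun c => (x (S c) - x c) * (y (S c) - y c)) (S (S n))) with
     (lsum (fun c => (x (S c) - x c) * (y (S c) - y c)) (S n) + (x (S (S n)) - x (S n)) * (y (S (S n)) - y (S n))).
   rewrite IHn. simpl lsum. ring.
Qed.

Lemma pol2 x y n : x O = 0 -> y O = 0 ->
  lsum (fun c => (x c + x (S c)) * (y c + y (S c))) (S n) =
  lsum (fun k => y (S k) * (x k + 2 * x (S k) + x (S (S k)))) n + y (S n) * (x (S n) + x n).
Proof. intros Hx Hy. induction n.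
 - simpl. rewrite Hx, Hy. ring.
 - change (lsum (fun c => (x c + x (S c)) * (y c + y (S c))) (S (S n))) with
     (lsum (fun c => (x c + x (S c)) * (y c + y (S c))) (S n) + (x (S n) + x (S (S n))) * (y (S n) + y (S (S n)))).
   rewrite IHn. simpl lsum. ring.
Qed.

Lemma lsum_shift f n : lsum f (S n) = f O + lsum (fun k => f (S k)) n.
Proof. induction n; cbn [lsum] in *; lra. Qed.

Lemma lsum_avg0 g n : (forall k, (k <= n)%nat -> 0 <= g k) ->
  lsum (fun k => (g k + g (S k)) / 2) n + g n / 2 <= lsum g (S n).
Proof. intros H. induction n.
 - cbn [lsum]. assert (0<= g O) by (apply H; lia). lra.
 - cbn [lsum] in *. assert (0 <= g (S n)) by (apply H; lia).
   assert (lsum (fun k => (g k + g (S k)) / 2) n + g n / 2 <= lsum g n + g n) by (apply IHn; intros; apply H; lia).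
   lra.
Qed.

Lemma lsum_avg g n : (forall k, (k <= n)%nat -> 0 <= g k) ->
  lsum (fun k => (g k + g (S k)) / 2) n <= lsum g (S n).
Proof. intros H. pose proof (lsum_avg0 g n H). assert (0 <= g n) by (apply H; lia). lra. Qed.


Definition wc (h : R) (x : nat -> R) c := (x (S c) - x c) / h.
Definition vpc (v : nat -> R) c := (v c + v (S c)) / 2.
Definition Fc h x v c := (wc h x c ^ 2 + vpc v c ^ 2) / 2.
Definition Awn h (x : nat -> R) k := (x (S (S k)) - x k) / (2 * h).
Definition Avpn (v : nat -> R) k := (v k + 2 * v (S k) + v (S (S k))) / 4.
Definition qw mu k := (mu * mu) ^ k.
Definition eqexpr h (al x z : nat -> R) k :=
  h / 4 * (z k + 2 * z (S k) + z (S (S k))) + / h * (2 * x (S k) - x k - x (S (S k)))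
  + h * al k * x (S k).

Lemma Fc_nonneg h x v c : 0 <= Fc h x v c.
Proof. unfold Fc. nra. Qed.

Lemma I1 h al x v z k : 0 < h ->
  Fc h x v (S k) - Fc h x v k =
  h * (Awn h v k * Avpn v k + Awn h x k * Avpn z k) + h * al k * x (S k) * Awn h x k
  - Awn h x k * eqexpr h al x z k.
Proof. intros Hh. unfold Fc, wc, vpc, Awn, Avpn, eqexpr. field. lra. Qed.

Lemma qw_S mu k : qw mu (S k) = mu * mu * qw mu k.
Proof. reflexivity. Qed.

Lemma qw_nonneg mu k : 0 <= qw mu k.
Proof. unfold qw. apply pow_le. nra. Qed.

Lemma qw_dec mu c k : 0 <= mu <= 1 -> (c <= k)%nat -> qw mu k <= qw mu c.
Proof. intros Hm H. induction H; [lra|]. rewrite qw_S. pose proof (qw_nonneg mu m).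
 assert (mu * mu <= 1) by nra. nra. Qed.

Lemma qw_le1 mu k : 0 <= mu <= 1 -> qw mu k <= 1.
Proof. intros. replace 1 with (qw mu 0) by reflexivity. apply qw_dec; auto; lia. Qed.

Lemma sbp0 (F : nat -> R) mu n : 0 < mu <= 1 -> (forall k, 0 <= F k) ->
  lsum (fun k => qw mu (S k) * (F (S k) - F k)) (S n) >=
  - qw mu 1 * F O + (1 - mu) * lsum (fun k => qw mu (S k) * F (S k)) n + qw mu (S n) * F (S n).
Proof. intros Hm HF. induction n.
 - cbn [lsum]. lra.
 - cbn [lsum] in *. rewrite (qw_S mu (S n)).
   pose proof (qw_nonneg mu (S n)). pose proof (HF (S n)).
   assert (0 <= qw mu (S n) * F (S n)) by nra.
   assert (mu * mu <= mu) by nra.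
   assert ((1 - mu) * (qw mu (S n) * F (S n)) <= (1 - mu * mu) * (qw mu (S n) * F (S n))) by nra.
   nra.
Qed.

Lemma sbp (F : nat -> R) mu n : 0 < mu <= 1 -> (forall k, 0 <= F k) ->
  lsum (fun k => qw mu (S k) * (F (S k) - F k)) (S n) >=
  - qw mu 1 * F O + (1 - mu) * lsum (fun k => qw mu (S k) * F (S k)) (S n).
Proof. intros Hm HF. pose proof (sbp0 F mu n Hm HF).
 replace (lsum (fun k => qw mu (S k) * F (S k)) (S n)) with (lsum (fun k => qw mu (S k) * F (S k)) n + qw mu (S n) * F (S n)) by reflexivity.
 pose proof (qw_nonneg mu (S n)). pose proof (HF (S n)).
 assert (0 <= qw mu (S n) * F (S n)) by nra. nra. Qed.

Lemma x_tele h x k : 0 < h -> x O = 0 -> x k = h * lsum (wc h x) k.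
Proof. intros Hh Hx. rewrite <- lsum_scal.
 rewrite (lsum_ext _ (fun c => x (S c) - x c)). rewrite lsum_tele, Hx; lra.
 intros; unfold wc; field; lra. Qed.

Lemma P1 N h mu x : 0 < h -> INR N * h <= 1 -> 0 <= mu <= 1 -> x O = 0 ->
 lsum (fun k => qw mu (S k) * x (S k) ^ 2) N <= mu * mu * lsum (fun c => qw mu c * wc h x c ^ 2) (S N).
Proof. intros Hh HN Hm Hx.
 set (W := lsum (fun c => qw mu c * wc h x c ^ 2) (S N)).
 assert (HW : 0 <= W) by (apply lsum_nonneg; intros; pose proof (qw_nonneg mu k); nra).
 apply Rle_trans with (lsum (fun _ => h * (mu * mu * W)) N).
 - apply lsum_le. intros k Hk.
   rewrite (x_tele h x (S k) Hh Hx).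
   pose proof (lsum_CS (wc h x) (S k)) as CS.
   assert (H1 : qw mu (S k) * lsum (fun c => wc h x c ^ 2) (S k) <= mu * mu * W).
   { rewrite <- lsum_scal. apply Rle_trans with (lsum (fun c => mu * mu * (qw mu c * wc h x c ^ 2)) (S k)).
     - apply lsum_le. intros c Hc. rewrite qw_S. pose proof (qw_dec mu c k Hm ltac:(lia)).
       assert (0 <= wc h x c ^ 2) by nra. assert (0 <= mu * mu) by nra.
       rewrite Rmult_assoc. apply Rmult_le_compat_l; auto. apply Rmult_le_compat_r; auto.
     - rewrite lsum_scal. apply Rmult_le_compat_l; [nra|]. unfold W. apply lsum_mono.
       + intros; pose proof (qw_nonneg mu k0); nra.
       + lia. }
   assert (HSk : INR (S k) * h <= 1).
   { apply Rle_trans with (INR N * h); auto. apply Rmult_le_compat_r; [lra|]. apply le_INR; lia. }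
   pose proof (qw_nonneg mu (S k)).
   assert (0 <= INR (S k)) by apply pos_INR.
   set (L := lsum (wc h x) (S k)) in *.
   set (L2 := lsum (fun c => wc h x c ^ 2) (S k)) in *.
   assert (qw mu (S k) * L ^ 2 <= qw mu (S k) * (INR (S k) * L2)) by (apply Rmult_le_compat_l; auto).
   assert (qw mu (S k) * (INR (S k) * L2) <= INR (S k) * (mu * mu * W)).
   { replace (qw mu (S k) * (INR (S k) * L2)) with (INR (S k) * (qw mu (S k) * L2)) by ring.
     apply Rmult_le_compat_l; auto. }
   assert (0 <= mu * mu * W) by nra.
   assert (INR (S k) * h * (mu * mu * W) <= 1 * (mu * mu * W)) by (apply Rmult_le_compat_r; auto).
   replace ((h * L) ^ 2) with (h * h * L ^ 2) by ring. nra.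
 - rewrite lsum_const. assert (0 <= mu * mu * W) by nra. nra.
Qed.

Lemma Awn_avg h x k : 0 < h -> Awn h x k = (wc h x k + wc h x (S k)) / 2.
Proof. intros. unfold Awn, wc. field. lra. Qed.

Lemma P2 N h mu x : 0 < h -> 0 <= mu <= 1 ->
 lsum (fun k => qw mu (S k) * Awn h x k ^ 2) N <= lsum (fun c => qw mu c * wc h x c ^ 2) (S N).
Proof. intros Hh Hm. eapply Rle_trans; [|apply lsum_avg].
 - apply lsum_le. intros k Hk. rewrite Awn_avg by auto.
   pose proof (qw_dec mu k (S k) Hm ltac:(lia)). pose proof (qw_nonneg mu (S k)).
   set (a := wc h x k). set (b := wc h x (S k)).
   assert (0 <= (a - b)^2) by apply pow2_ge_0.
   assert (((a + b) / 2) ^ 2 <= (a^2 + b^2)/2) by nra.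
   assert (0 <= a ^ 2) by nra.
   assert (qw mu (S k) * ((a + b) / 2) ^ 2 <= qw mu (S k) * ((a^2 + b^2)/2)) by (apply Rmult_le_compat_l; auto).
   nra.
 - intros; pose proof (qw_nonneg mu k); nra.
Qed.

Lemma young_al al B mu y A : 0 <= al <= B -> 0 < mu ->
  al * y * A <= B * y ^ 2 / (2 * mu) + B * mu * A ^ 2 / 2.
Proof. intros Hal Hm.
 assert (0 <= (y - mu * A) ^ 2) by apply pow2_ge_0.
 set (Z := y ^ 2 + mu ^ 2 * A ^ 2).
 assert (2 * mu * (y * A) <= Z) by (unfold Z; nra).
 assert (0 <= Z) by (unfold Z; nra).
 assert (al * (2 * mu * (y * A)) <= al * Z) by (apply Rmult_le_compat_l; lra).
 assert (al * Z <= B * Z) by (apply Rmult_le_compat_r; lra).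
 assert (al * y * A = (al * (2 * mu * (y * A))) / (2 * mu)) by (field; lra).
 assert (B * y ^ 2 / (2 * mu) + B * mu * A ^ 2 / 2 = B * Z / (2 * mu)) by (unfold Z; field; lra).
 rewrite H4, H5. apply Rmult_le_compat_r. 
 - apply Rlt_le, Rinv_0_lt_compat; lra.
 - lra.
Qed.

Lemma Pbound N h B mu al x : 0 < h -> INR N * h <= 1 -> 0 <= B ->
 (forall k, (k < N)%nat -> 0 <= al k <= B) -> 0 < mu <= 1 -> x O = 0 ->
 lsum (fun k => qw mu (S k) * (h * al k * x (S k) * Awn h x k)) N
   <= B * mu * h * lsum (fun c => qw mu c * wc h x c ^ 2) (S N).
Proof. intros Hh HN HB Hal Hm Hx.
 set (W := lsum (fun c => qw mu c * wc h x c ^ 2) (S N)).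
 apply Rle_trans with (B * h / (2 * mu) * lsum (fun k => qw mu (S k) * x (S k) ^ 2) N
                      + B * h * mu / 2 * lsum (fun k => qw mu (S k) * Awn h x k ^ 2) N).
 - rewrite <- !lsum_scal, <- lsum_plus. apply lsum_le. intros k Hk.
   pose proof (young_al (al k) B mu (x (S k)) (Awn h x k) (Hal k Hk) ltac:(lra)).
   pose proof (qw_nonneg mu (S k)).
   assert (0 <= qw mu (S k) * h) by nra.
   assert (qw mu (S k) * h * (al k * x (S k) * Awn h x k) <= qw mu (S k) * h * (B * x (S k) ^ 2 / (2 * mu) + B * mu * Awn h x k ^ 2 / 2)) by (apply Rmult_le_compat_l; auto).
   replace (qw mu (S k) * (h * al k * x (S k) * Awn h x k)) with (qw mu (S k) * h * (al k * x (S k) * Awn h x k)) by ring.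
   eapply Rle_trans; [exact H2|]. right. field. lra.
 - pose proof (P1 N h mu x Hh HN ltac:(lra) Hx). pose proof (P2 N h mu x Hh ltac:(lra)).
   fold W in H, H0.
   assert (0 <= B * h / (2 * mu)).
   { unfold Rdiv. apply Rmult_le_pos; [nra|]. apply Rlt_le, Rinv_0_lt_compat; lra. }
   assert (0 <= B * h * mu / 2) by (unfold Rdiv; repeat apply Rmult_le_pos; lra).
   apply Rle_trans with (B * h / (2 * mu) * (mu * mu * W) + B * h * mu / 2 * W).
   + apply Rplus_le_compat; apply Rmult_le_compat_l; auto.
   + right. field. lra.
Qed.

Lemma mu_facts B h mu : 0 <= B -> 0 < h -> mu = / (1 + (4*B+4)*h) ->
  0 < mu <= 1 /\ (4*B+4) * mu * h = 1 - mu.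
Proof. intros HB Hh Hmu. assert (0 < 1 + (4*B+4)*h) by nra.
 split; [split|].
 - subst; apply Rinv_0_lt_compat; lra.
 - subst. rewrite <- Rinv_1. apply Rinv_le_contravar; nra.
 - subst. field. lra.
Qed.

Lemma key N h B al mu x v z : (1 <= N)%nat -> 0 < h -> INR N * h <= 1 -> 0 <= B ->
 (forall k, (k < N)%nat -> 0 <= al k <= B) -> mu = / (1 + (4*B+4)*h) -> x O = 0 ->
 (forall k, (k < N)%nat -> eqexpr h al x z k = 0) ->
 lsum (fun k => qw mu (S k) * h * (Awn h v k * Avpn v k + Awn h x k * Avpn z k)) N + 2 * Fc h x v O
 >= (4*B+4) * mu / 2 * (h * lsum (fun c => qw mu c * Fc h x v c) (S N)).
Proof. intros HN1 Hh HN HB Hal Hmu Hx Heq.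
 destruct (mu_facts B h mu HB Hh Hmu) as [Hm Hlm].
 set (Sd := lsum (fun k => qw mu (S k) * h * (Awn h v k * Avpn v k + Awn h x k * Avpn z k)) N).
 set (P := lsum (fun k => qw mu (S k) * (h * al k * x (S k) * Awn h x k)) N).
 set (L := lsum (fun k => qw mu (S k) * Fc h x v (S k)) N).
 set (Qs := lsum (fun c => qw mu c * Fc h x v c) (S N)).
 set (W := lsum (fun c => qw mu c * wc h x c ^ 2) (S N)).
 assert (E1 : lsum (fun k => qw mu (S k) * (Fc h x v (S k) - Fc h x v k)) N = Sd + P).
 { unfold Sd, P. rewrite <- lsum_plus. apply lsum_ext. intros k Hk.
   rewrite (I1 h al x v z k Hh), (Heq k Hk). ring. }
 assert (E2 : lsum (fun k => qw mu (S k) * (Fc h x v (S k) - Fc h x v k)) N >= - qw mu 1 * Fc h x v O + (1 - mu) * L).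
 { destruct N as [|n]; [lia|]. apply sbp; auto. intros; apply Fc_nonneg. }
 assert (E3 : Qs = Fc h x v O + L).
 { unfold Qs, L. rewrite lsum_shift. change (qw mu 0) with 1. ring. }
 assert (E4 : P <= B * mu * h * W) by (apply Pbound; auto).
 assert (E5 : W <= 2 * Qs).
 { unfold W, Qs. rewrite <- lsum_scal. apply lsum_le. intros c Hc. pose proof (qw_nonneg mu c).
   unfold Fc. assert (0 <= vpc v c ^ 2) by nra. nra. }
 assert (HF0 : 0 <= Fc h x v O) by apply Fc_nonneg.
 assert (HL : 0 <= L) by (apply lsum_nonneg; intros; pose proof (qw_nonneg mu (S k)); pose proof (Fc_nonneg h x v (S k)); nra).
 assert (q1 : qw mu 1 = mu * mu) by (unfold qw; ring).
 assert (HW : 0 <= W) by (apply lsum_nonneg; intros; pose proof (qw_nonneg mu k); nra).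
 assert (E6 : B * mu * h * W <= B * mu * h * (2 * Qs)).
 { apply Rmult_le_compat_l; auto. repeat apply Rmult_le_pos; lra. }
 set (X := mu * h * Qs).
 assert (HX : 0 <= X) by (unfold X; repeat apply Rmult_le_pos; lra).
 assert (E7 : (4*B+4) * X = (1 - mu) * (Fc h x v O + L)).
 { unfold X. rewrite <- E3, <- Hlm. rewrite !Rmult_assoc. reflexivity. }
 assert (E8 : B * mu * h * (2 * Qs) = 2 * B * X) by (unfold X; ring).
 replace ((4*B+4) * mu / 2 * (h * Qs)) with ((2*B+2) * X) by (unfold X; field).
 assert ((1 - mu) * Fc h x v O <= Fc h x v O) by nra.
 assert (mu * mu * Fc h x v O <= Fc h x v O) by nra.
 nra.
Qed.

Lemma Avpn_avg v k : Avpn v k = (vpc v k + vpc v (S k)) / 2.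
Proof. unfold Avpn, vpc. field. Qed.

Lemma S_pt h q a b c d : 0 < h -> 0 <= q <= 1 ->
  Rabs (q * h * ((a + b) / 2 * ((c + d) / 2))) <= h * (((a^2 + c^2)/2 + (b^2 + d^2)/2) / 2).
Proof. intros Hh Hq.
 set (A := (a + b) / 2). set (C := (c + d) / 2).
 assert (A ^ 2 <= (a^2 + b^2)/2) by (unfold A; assert (0 <= (a - b)^2) by apply pow2_ge_0; nra).
 assert (C ^ 2 <= (c^2 + d^2)/2) by (unfold C; assert (0 <= (c - d)^2) by apply pow2_ge_0; nra).
 assert (Rabs (A * C) <= (A^2 + C^2)/2).
 { rewrite Rabs_mult. assert (0 <= (Rabs A - Rabs C)^2) by apply pow2_ge_0.
   rewrite <- (pow2_abs A), <- (pow2_abs C). nra. }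
 rewrite Rabs_mult, (Rabs_pos_eq (q * h)) by nra.
 assert (0 <= Rabs (A * C)) by apply Rabs_pos.
 assert (0 <= h * Rabs (A * C)) by nra.
 assert (q * h * Rabs (A * C) <= h * Rabs (A * C)).
 { replace (q * h * Rabs (A * C)) with (q * (h * Rabs (A * C))) by ring. nra. }
 assert (h * Rabs (A * C) <= h * ((A^2 + C^2)/2)) by (apply Rmult_le_compat_l; lra).
 assert (h * ((A^2 + C^2)/2) <= h * (((a^2 + c^2)/2 + (b^2 + d^2)/2) / 2)) by (apply Rmult_le_compat_l; lra).
 lra.
Qed.

Lemma lsum_abs f n : Rabs (lsum f n) <= lsum (fun k => Rabs (f k)) n.
Proof. induction n; cbn [lsum]. rewrite Rabs_R0; lra.
 eapply Rle_trans; [apply Rabs_triang|]. lra. Qed.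

Lemma S_bound N h mu x v : 0 < h -> 0 <= mu <= 1 ->
  Rabs (lsum (fun k => qw mu (S k) * h * (Awn h x k * Avpn v k)) N) <= h * lsum (Fc h x v) (S N).
Proof. intros Hh Hm.
 eapply Rle_trans; [apply lsum_abs|].
 apply Rle_trans with (lsum (fun k => h * ((Fc h x v k + Fc h x v (S k)) / 2)) N).
 - apply lsum_le. intros k Hk. rewrite Awn_avg, Avpn_avg by auto.
   pose proof (qw_nonneg mu (S k)). pose proof (qw_le1 mu (S k) Hm).
   unfold Fc. apply S_pt; auto.
 - rewrite lsum_scal. apply Rmult_le_compat_l; [lra|]. apply lsum_avg. intros; apply Fc_nonneg.
Qed.

Lemma Q_lower N h mu x v : 0 < h -> 0 <= mu <= 1 ->
  qw mu N * (h * lsum (Fc h x v) (S N)) <= h * lsum (fun c => qw mu c * Fc h x v c) (S N).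
Proof. intros Hh Hm.
 replace (qw mu N * (h * lsum (Fc h x v) (S N))) with (h * (qw mu N * lsum (Fc h x v) (S N))) by ring.
 apply Rmult_le_compat_l; [lra|]. rewrite <- lsum_scal. apply lsum_le. intros c Hc.
 pose proof (qw_dec mu c N Hm ltac:(lia)). pose proof (Fc_nonneg h x v c). nra.
Qed.

Definition E0 N h x v := h * lsum (Fc h x v) (S N).
Definition En N h (al : nat -> R) x v := E0 N h x v + h / 2 * lsum (fun k => al k * x (S k) ^ 2) N.

Lemma En_bounds N h B al x v : 0 < h -> INR N * h <= 1 -> 0 <= B ->
 (forall k, (k < N)%nat -> 0 <= al k <= B) -> x O = 0 ->
 E0 N h x v <= En N h al x v <= (1 + B) * E0 N h x v.
Proof. intros Hh HN HB Hal Hx. unfold En.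
 assert (H0 : 0 <= lsum (fun k => al k * x (S k) ^ 2) N).
 { apply lsum_nonneg. intros k Hk. pose proof (Hal k Hk). nra. }
 split. assert (0 <= h / 2 * lsum (fun k => al k * x (S k) ^ 2) N) by (apply Rmult_le_pos; lra). lra.
 assert (H1 : lsum (fun k => al k * x (S k) ^ 2) N <= B * lsum (fun k => qw 1 (S k) * x (S k) ^ 2) N).
 { rewrite <- lsum_scal. apply lsum_le. intros k Hk. unfold qw. rewrite Rmult_1_l, pow1.
   pose proof (Hal k Hk). assert (0 <= x (S k) ^ 2) by nra. nra. }
 pose proof (P1 N h 1 x Hh HN ltac:(lra) Hx) as H2.
 assert (H3 : lsum (fun c => qw 1 c * wc h x c ^ 2) (S N) <= 2 * lsum (Fc h x v) (S N)).
 { rewrite <- lsum_scal. apply lsum_le. intros c Hc. unfold qw, Fc. rewrite Rmult_1_l, pow1.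
   assert (0 <= vpc v c ^ 2) by nra. lra. }
 unfold E0.
 assert (B * lsum (fun k => qw 1 (S k) * x (S k) ^ 2) N <= B * (2 * lsum (Fc h x v) (S N))).
 { apply Rmult_le_compat_l; auto. lra. }
 assert (h / 2 * lsum (fun k => al k * x (S k) ^ 2) N <= h / 2 * (B * (2 * lsum (Fc h x v) (S N)))).
 { apply Rmult_le_compat_l; lra. }
 nra.
Qed.

Lemma energy_node N h al x v : 0 < h -> x O = 0 -> x (S N) = 0 -> v O = 0 -> v (S N) = 0 ->
  lsum (fun k => (/ h * (2 * x (S k) - x k - x (S (S k))) + h * al k * x (S k)) * x (S k)) N
  + lsum (fun k => h / 4 * (v k + 2 * v (S k) + v (S (S k))) * v (S k)) N
  = 2 * En N h al x v.
Proof. intros Hh Hx0 HxN Hv0 HvN.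
 pose proof (pol1 x x N Hx0 Hx0) as A1. pose proof (pol2 v v N Hv0 Hv0) as A2.
 rewrite HxN in A1. rewrite HvN in A2.
 unfold En, E0, Fc.
 assert (B1 : lsum (fun c => (wc h x c ^ 2 + vpc v c ^ 2) / 2) (S N) =
   / (2 * h * h) * lsum (fun c => (x (S c) - x c) * (x (S c) - x c)) (S N)
   + / 8 * lsum (fun c => (v c + v (S c)) * (v c + v (S c))) (S N)).
 { rewrite <- !lsum_scal, <- lsum_plus. apply lsum_ext. intros. unfold wc, vpc. field. lra. }
 rewrite B1, A1, A2.
 assert (B2 : lsum (fun k => (/ h * (2 * x (S k) - x k - x (S (S k))) + h * al k * x (S k)) * x (S k)) N
   = / h * lsum (fun k => x (S k) * (2 * x (S k) - x k - x (S (S k)))) N + h * lsum (fun k => al k * x (S k) ^ 2) N).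
 { rewrite <- !lsum_scal, <- lsum_plus. apply lsum_ext. intros. field. lra. }
 assert (B3 : lsum (fun k => h / 4 * (v k + 2 * v (S k) + v (S (S k))) * v (S k)) N
   = h / 4 * lsum (fun k => v (S k) * (v k + 2 * v (S k) + v (S (S k)))) N).
 { rewrite <- !lsum_scal. apply lsum_ext. intros. ring. }
 rewrite B2, B3. field. lra.
Qed.

Lemma energy_deriv N h al x v z : 0 < h -> x O = 0 -> v O = 0 -> z O = 0 -> v (S N) = 0 ->
  h * lsum (fun c => wc h x c * wc h v c + vpc v c * vpc z c) (S N)
  + h * lsum (fun k => al k * x (S k) * v (S k)) N
  = lsum (fun k => v (S k) * eqexpr h al x z k) N.
Proof. intros Hh Hx0 Hv0 Hz0 HvN.
 pose proof (pol1 x v N Hx0 Hv0) as A1. pose proof (pol2 z v N Hz0 Hv0) as A2.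
 rewrite HvN in A1, A2.
 assert (B1 : lsum (fun c => wc h x c * wc h v c + vpc v c * vpc z c) (S N) =
   / (h * h) * lsum (fun c => (x (S c) - x c) * (v (S c) - v c)) (S N)
   + / 4 * lsum (fun c => (z c + z (S c)) * (v c + v (S c))) (S N)).
 { rewrite <- !lsum_scal, <- lsum_plus. apply lsum_ext. intros. unfold wc, vpc. field. lra. }
 rewrite B1, A1, A2.
 assert (B2 : lsum (fun k => v (S k) * eqexpr h al x z k) N =
   / h * lsum (fun k => v (S k) * (2 * x (S k) - x k - x (S (S k)))) N
   + h / 4 * lsum (fun k => v (S k) * (z k + 2 * z (S k) + z (S (S k)))) N
   + h * lsum (fun k => al k * x (S k) * v (S k)) N).
 { rewrite <- !lsum_scal, <- !lsum_plus. apply lsum_ext. intros. unfold eqexpr. ring. }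
 rewrite B2. field. lra.
Qed.


Definition eT (N : nat) (u : nat -> R -> R) (k : nat) (t : R) : R :=
  if andb (Nat.leb 1 k) (Nat.leb k N) then u k t else 0.
Definition xs N u (t : R) := fun k => eT N u k t.

Lemma eT_0 N u t : eT N u O t = 0.
Proof. reflexivity. Qed.
Lemma eT_SN N u t : eT N u (S N) t = 0.
Proof. unfold eT. replace (Nat.leb (S N) N) with false. rewrite Bool.andb_false_r; auto.
 symmetry. apply Nat.leb_gt. lia. Qed.

Lemma eT_der N u du : (forall j t, (1 <= j <= N)%nat -> is_derive (u j) t (du j t)) ->
  forall k t, is_derive (eT N u k) t (eT N du k t).
Proof. intros H k t. unfold eT. destruct (andb (Nat.leb 1 k) (Nat.leb k N)) eqn:E.
 - apply Bool.andb_true_iff in E. destruct E as [E1 E2]. apply Nat.leb_le in E1, E2. apply H. lia.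
 - exact (is_derive_const (K:=R_AbsRing) (V:=R_NormedModule) 0 _).
Qed.

Lemma eT_ex N u du : (forall j t, (1 <= j <= N)%nat -> is_derive (u j) t (du j t)) ->
  forall k t, ex_derive (fun x => eT N u k x) t.
Proof. intros H k t. eexists. apply (eT_der N u du H). Qed.

Lemma eT_Derive N u du : (forall j t, (1 <= j <= N)%nat -> is_derive (u j) t (du j t)) ->
  forall k t, Derive (fun x => eT N u k x) t = eT N du k t.
Proof. intros H k t. apply is_derive_unique. apply (eT_der N u du H). Qed.

Lemma lsum_derive (f : nat -> R -> R) (df : nat -> R) n t :
  (forall k, (k < n)%nat -> is_derive (f k) t (df k)) ->
  is_derive (fun t => lsum (fun k => f k t) n) t (lsum df n).
Proof. induction n; intros H; cbn [lsum].
 - exact (is_derive_const (K:=R_AbsRing) (V:=R_NormedModule) 0 _).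
 - apply (is_derive_plus (fun t => lsum (fun k => f k t) n) (f n)).
   + apply IHn; intros; apply H; lia.
   + apply H; lia.
Qed.

Lemma Fc_der N h u du ddu c t : 0 < h ->
  (forall j t, (1 <= j <= N)%nat -> is_derive (u j) t (du j t)) ->
  (forall j t, (1 <= j <= N)%nat -> is_derive (du j) t (ddu j t)) ->
  is_derive (fun t => Fc h (xs N u t) (xs N du t) c) t
    (wc h (xs N u t) c * wc h (xs N du t) c + vpc (xs N du t) c * vpc (xs N ddu t) c).
Proof. intros Hh H1 H2. unfold Fc, wc, vpc, xs.
 auto_derive.
 - repeat split; first [eapply eT_ex; eassumption | idtac].
 - rewrite !(eT_Derive N u du H1), !(eT_Derive N du ddu H2). field. lra.
Qed.

Lemma Sterm_der N h mu u du ddu k t : 0 < h ->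
  (forall j t, (1 <= j <= N)%nat -> is_derive (u j) t (du j t)) ->
  (forall j t, (1 <= j <= N)%nat -> is_derive (du j) t (ddu j t)) ->
  is_derive (fun t => qw mu (S k) * h * (Awn h (xs N u t) k * Avpn (xs N du t) k)) t
    (qw mu (S k) * h * (Awn h (xs N du t) k * Avpn (xs N du t) k + Awn h (xs N u t) k * Avpn (xs N ddu t) k)).
Proof. intros Hh H1 H2. unfold Awn, Avpn, xs.
 auto_derive.
 - repeat split; first [eapply eT_ex; eassumption | idtac].
 - rewrite !(eT_Derive N u du H1), !(eT_Derive N du ddu H2). field. lra.
Qed.

Lemma alterm_der N (c : R) u du k t :
  (forall j t, (1 <= j <= N)%nat -> is_derive (u j) t (du j t)) ->
  is_derive (fun t => c * xs N u t (S k) ^ 2) t (c * (2 * xs N u t (S k) * xs N du t (S k))).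
Proof. intros H1. unfold xs.
 auto_derive.
 - repeat split; first [eapply eT_ex; eassumption | idtac].
 - rewrite !(eT_Derive N u du H1). ring.
Qed.

Lemma Sf_der N h mu u du ddu t : 0 < h ->
  (forall j t, (1 <= j <= N)%nat -> is_derive (u j) t (du j t)) ->
  (forall j t, (1 <= j <= N)%nat -> is_derive (du j) t (ddu j t)) ->
  is_derive (fun t => lsum (fun k => qw mu (S k) * h * (Awn h (xs N u t) k * Avpn (xs N du t) k)) N) t
    (lsum (fun k => qw mu (S k) * h * (Awn h (xs N du t) k * Avpn (xs N du t) k + Awn h (xs N u t) k * Avpn (xs N ddu t) k)) N).
Proof. intros Hh H1 H2.
 apply (lsum_derive (fun k t => qw mu (S k) * h * (Awn h (xs N u t) k * Avpn (xs N du t) k))).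
 intros k Hk. apply Sterm_der; auto.
Qed.

Lemma Ef_der N h al u du ddu t : 0 < h ->
  (forall j t, (1 <= j <= N)%nat -> is_derive (u j) t (du j t)) ->
  (forall j t, (1 <= j <= N)%nat -> is_derive (du j) t (ddu j t)) ->
  is_derive (fun t => En N h al (xs N u t) (xs N du t)) t
    (h * lsum (fun c => wc h (xs N u t) c * wc h (xs N du t) c + vpc (xs N du t) c * vpc (xs N ddu t) c) (S N)
     + h * lsum (fun k => al k * xs N u t (S k) * xs N du t (S k)) N).
Proof. intros Hh H1 H2. unfold En, E0.
 apply (is_derive_plus (fun t => h * lsum (Fc h (xs N u t) (xs N du t)) (S N))
                       (fun t => h / 2 * lsum (fun k => al k * xs N u t (S k) ^ 2) N)).
 - apply (is_derive_scal (fun t => lsum (Fc h (xs N u t) (xs N du t)) (S N))).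
   apply (lsum_derive (fun c t => Fc h (xs N u t) (xs N du t) c)).
   intros; apply Fc_der; auto.
 - replace (h * lsum (fun k => al k * xs N u t (S k) * xs N du t (S k)) N) with
     (h / 2 * lsum (fun k => al k * (2 * xs N u t (S k) * xs N du t (S k))) N).
   + apply (is_derive_scal (fun t => lsum (fun k => al k * xs N u t (S k) ^ 2) N)).
     apply (lsum_derive (fun k t => al k * xs N u t (S k) ^ 2)).
     intros; apply alterm_der; auto.
   + rewrite <- !lsum_scal. apply lsum_ext. intros. field.
Qed.

Lemma mono_lemma f df T : (forall t, is_derive f t (df t)) -> (forall t, 0 < t < T -> 0 <= df t) ->
  forall t, 0 <= t <= T -> f 0 <= f t.
Proof. intros Hd Hp t Ht. destruct (Req_dec t 0) as [E|E]; [subst; lra|].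
 destruct (MVT_cor2 f df 0 t ltac:(lra)) as [c [Hc1 Hc2]].
 - intros c _. apply is_derive_Reals. apply Hd.
 - assert (0 <= df c) by (apply Hp; lra). nra.
Qed.

Lemma RInt_der (g : R -> R) : (forall t, continuous g t) -> forall t, is_derive (fun t => RInt g 0 t) t (g t).
Proof. intros Hc t. apply (is_derive_RInt (V:=R_NormedModule) g (fun b => RInt (V:=R_CompleteNormedModule) g 0 b) 0 t); auto.
 apply filter_forall. intros b. apply (RInt_correct (V:=R_CompleteNormedModule) g 0 b). apply (ex_RInt_continuous (V:=R_CompleteNormedModule)). intros; auto.
Qed.

Lemma exp_pow_le x n : exp x ^ n = exp (INR n * x).
Proof. induction n. simpl. rewrite Rmult_0_l, exp_0. reflexivity.
 rewrite S_INR. simpl pow. rewrite IHn, <- exp_plus. f_equal. ring. Qed.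

Lemma exp_le_exp' x y : x <= y -> exp x <= exp y.
Proof. intros [H|H]; [left; apply exp_increasing; auto | subst; lra]. Qed.

Lemma mu_pow_lower lam h N : 0 <= lam -> 0 < h -> INR (N + 1) * h = 1 ->
  exp (- (2 * lam)) <= / (1 + lam * h) * ((/ (1 + lam * h)) * (/ (1 + lam * h))) ^ N.
Proof. intros Hl Hh HN.
 assert (Hp : 0 < 1 + lam * h) by nra.
 replace (/ (1 + lam * h) * ((/ (1 + lam * h)) * (/ (1 + lam * h))) ^ N) with (/ ((1 + lam * h) ^ (2 * N + 1))).
 2: { assert (Hq : forall p n, p * (p * p) ^ n = p ^ (2 * n + 1)).
      { intros p n. induction n. simpl. ring. replace (2 * S n + 1)%nat with (S (S (2 * n + 1))) by lia.
        change (p ^ S (S (2 * n + 1))) with (p * (p * p ^ (2 * n + 1))).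
        change ((p * p) ^ S n) with (p * p * (p * p) ^ n). rewrite <- IHn. ring. }
      rewrite <- Hq. rewrite <- Rinv_mult, pow_inv, <- Rinv_mult. reflexivity. }
 rewrite exp_Ropp. apply Rinv_le_contravar. apply pow_lt; lra.
 assert (1 + lam * h <= exp (lam * h)).
 { destruct (Req_dec (lam * h) 0) as [E|E]. rewrite E, exp_0. lra. left. apply exp_ineq1; auto. }
 apply Rle_trans with (exp (lam * h) ^ (2 * N + 1)).
 - apply pow_incr. lra.
 - rewrite exp_pow_le. apply exp_le_exp'. rewrite plus_INR, mult_INR. simpl INR.
   rewrite plus_INR in HN. simpl INR in HN. nra.
Qed.


Lemma hN_facts N : 0 < hN N /\ INR (N + 1) * hN N = 1 /\ INR N * hN N <= 1.
Proof. unfold hN. assert (0 < INR (N + 1)) by (apply lt_0_INR; lia).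
 split; [apply Rinv_0_lt_compat; auto|]. split; [field; lra|].
 rewrite plus_INR in *. simpl INR in *. 
 assert (INR N * / (INR N + 1) <= (INR N + 1) * / (INR N + 1)).
 { apply Rmult_le_compat_r. left; apply Rinv_0_lt_compat; lra. lra. }
 rewrite Rinv_r in H0 by lra. lra.
Qed.

Lemma real_main N a B T u du ddu :
 (1 <= N)%nat -> 0 <= B -> (forall x, 0 <= x <= 1 -> 0 <= a x <= B) -> 0 < T ->
 (forall j t, (1 <= j <= N)%nat -> is_derive (u j) t (du j t)) ->
 (forall j t, (1 <= j <= N)%nat -> is_derive (du j) t (ddu j t)) ->
 (forall t, 0 < t < T -> forall k, (k < N)%nat ->
    eqexpr (hN N) (fun k => a (INR (S k) * hN N)) (xs N u t) (xs N ddu t) k = 0) ->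
 RInt (fun t => (eT N u 1 t / hN N) ^ 2 + (eT N du 1 t / 2) ^ 2) 0 T >=
   ((4*B+4) * exp (-(2*(4*B+4))) / (2*(1+B)) * T - 2)
     * En N (hN N) (fun k => a (INR (S k) * hN N)) (xs N u 0) (xs N du 0).
Proof.
 intros HN1 HB Ha HT H1 H2 Heq.
 destruct (hN_facts N) as [Hh [HNh HNh']].
 set (h := hN N) in *.
 set (al := fun k => a (INR (S k) * h)) in *.
 set (lam := 4*B+4).
 set (mu := / (1 + lam * h)).
 destruct (mu_facts B h mu HB Hh eq_refl) as [Hmu Hlm].
 assert (Hal : forall k, (k < N)%nat -> 0 <= al k <= B).
 { intros k Hk. unfold al. apply Ha. split.
   - apply Rmult_le_pos; [apply pos_INR | lra].
   - apply Rle_trans with (INR N * h); auto. apply Rmult_le_compat_r; [lra|]. apply le_INR; lia. }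
 set (Ef := fun t => En N h al (xs N u t) (xs N du t)).
 assert (HbT : forall t, xs N u t O = 0 /\ xs N du t O = 0 /\ xs N ddu t O = 0
                  /\ xs N u t (S N) = 0 /\ xs N du t (S N) = 0).
 { intros t. unfold xs. rewrite !eT_0, !eT_SN. auto. }
 assert (HEd : forall t, is_derive Ef t
    (h * lsum (fun c => wc h (xs N u t) c * wc h (xs N du t) c + vpc (xs N du t) c * vpc (xs N ddu t) c) (S N)
     + h * lsum (fun k => al k * xs N u t (S k) * xs N du t (S k)) N)).
 { intros t. apply Ef_der; auto. }
 assert (HEd0 : forall t, 0 < t < T ->
    h * lsum (fun c => wc h (xs N u t) c * wc h (xs N du t) c + vpc (xs N du t) c * vpc (xs N ddu t) c) (S N)
     + h * lsum (fun k => al k * xs N u t (S k) * xs N du t (S k)) N = 0).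
 { intros t Ht. destruct (HbT t) as [b1 [b2 [b3 [b4 b5]]]].
   rewrite energy_deriv by auto.
   rewrite (lsum_ext _ (fun _ => 0)). rewrite lsum_const; ring.
   intros k Hk. rewrite (Heq t Ht k Hk). ring. }
 assert (HE : forall t, 0 <= t <= T -> Ef t = Ef 0).
 { intros t Ht. apply Rle_antisym.
   - assert (- Ef 0 <= - Ef t); [|lra].
     apply (mono_lemma (fun t => - Ef t) (fun t => - (h * lsum (fun c => wc h (xs N u t) c * wc h (xs N du t) c + vpc (xs N du t) c * vpc (xs N ddu t) c) (S N)
     + h * lsum (fun k => al k * xs N u t (S k) * xs N du t (S k)) N)) T); auto.
     + intros s. apply (is_derive_opp (K:=R_AbsRing) (V:=R_NormedModule) Ef s _ (HEd s)).
     + intros s Hs. rewrite HEd0 by auto. lra.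
   - apply (mono_lemma Ef (fun t => h * lsum (fun c => wc h (xs N u t) c * wc h (xs N du t) c + vpc (xs N du t) c * vpc (xs N ddu t) c) (S N)
     + h * lsum (fun k => al k * xs N u t (S k) * xs N du t (S k)) N) T); auto. intros s Hs. rewrite HEd0 by auto. lra. }
 assert (HEb : forall t, E0 N h (xs N u t) (xs N du t) <= Ef t <= (1 + B) * E0 N h (xs N u t) (xs N du t)).
 { intros t. apply En_bounds; auto; apply HbT. }
 assert (HE0pos : forall t, 0 <= E0 N h (xs N u t) (xs N du t)).
 { intros t. unfold E0. apply Rmult_le_pos; [lra|]. apply lsum_nonneg. intros; apply Fc_nonneg. }
 assert (HEf0 : 0 <= Ef 0) by (pose proof (HEb 0); pose proof (HE0pos 0); lra).
 set (Sf := fun t => lsum (fun k => qw mu (S k) * h * (Awn h (xs N u t) k * Avpn (xs N du t) k)) N).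
 assert (HSb : forall t, 0 <= t <= T -> Rabs (Sf t) <= Ef 0).
 { intros t Ht. rewrite <- (HE t Ht). eapply Rle_trans; [apply S_bound; auto; lra|].
   destruct (HEb t). unfold E0 in *. lra. }
 set (g := fun t => (eT N u 1 t / h) ^ 2 + (eT N du 1 t / 2) ^ 2).
 assert (Hg : forall t, g t = 2 * Fc h (xs N u t) (xs N du t) O).
 { intros t. unfold g, Fc, wc, vpc, xs. cbv beta. rewrite !eT_0. field. lra. }
 assert (Hgc : forall t, continuous g t).
 { intros t. apply (ex_derive_continuous (K:=R_AbsRing) (V:=R_NormedModule)). unfold g. auto_derive.
   repeat split; first [eapply eT_ex; eassumption | idtac]. }
 set (K := lam * mu / 2 * qw mu N * Ef 0 / (1 + B)).
 set (Phi := fun t => Sf t + RInt g 0 t - K * t).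
 assert (HPd : forall t, is_derive Phi t
    (lsum (fun k => qw mu (S k) * h * (Awn h (xs N du t) k * Avpn (xs N du t) k + Awn h (xs N u t) k * Avpn (xs N ddu t) k)) N
     + g t - K)).
 { intros t. unfold Phi.
   apply (is_derive_minus (fun t => Sf t + RInt g 0 t) (fun t => K * t)).
   - apply (is_derive_plus Sf (fun t => RInt g 0 t)).
     + apply Sf_der; auto.
     + apply RInt_der; auto.
   - auto_derive; [auto | ring]. }
 assert (HPp : forall t, 0 < t < T ->
    0 <= lsum (fun k => qw mu (S k) * h * (Awn h (xs N du t) k * Avpn (xs N du t) k + Awn h (xs N u t) k * Avpn (xs N ddu t) k)) N
     + g t - K).
 { intros t Ht.
   destruct (HbT t) as [b1 [b2 [b3 [b4 b5]]]].
   pose proof (key N h B al mu (xs N u t) (xs N du t) (xs N ddu t) HN1 Hh HNh' HB Hal eq_refl b1 (Heq t Ht)) as Hk.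
   pose proof (Q_lower N h mu (xs N u t) (xs N du t) Hh ltac:(lra)) as HQ.
   rewrite Hg.
   destruct (HEb t) as [_ Hub]. rewrite (HE t ltac:(lra)) in Hub. fold (E0 N h (xs N u t) (xs N du t)) in HQ.
   set (E0t := E0 N h (xs N u t) (xs N du t)) in *.
   set (Qt := h * lsum (fun c => qw mu c * Fc h (xs N u t) (xs N du t) c) (S N)) in *.
   assert (Hq0 : 0 <= qw mu N) by apply qw_nonneg.
   assert (Hc : 0 <= lam * mu / 2) by (unfold lam; apply Rmult_le_pos; [nra|lra]).
   assert (K <= lam * mu / 2 * Qt).
   { unfold K. apply Rle_trans with (lam * mu / 2 * (qw mu N * E0t)).
     - replace (lam * mu / 2 * qw mu N * Ef 0 / (1 + B)) with (lam * mu / 2 * (qw mu N * (Ef 0 / (1 + B)))) by (field; lra).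
       apply Rmult_le_compat_l; auto. apply Rmult_le_compat_l; auto.
       apply Rmult_le_reg_l with (1 + B); [lra|]. replace ((1 + B) * (Ef 0 / (1 + B))) with (Ef 0) by (field; lra). lra.
     - apply Rmult_le_compat_l; auto. }
   unfold lam in *. lra. }
 assert (HPhi : Phi 0 <= Phi T) by (apply (mono_lemma Phi (fun t => lsum (fun k => qw mu (S k) * h * (Awn h (xs N du t) k * Avpn (xs N du t) k + Awn h (xs N u t) k * Avpn (xs N ddu t) k)) N
     + g t - K) T); auto; lra).
 unfold Phi in HPhi. rewrite RInt_point in HPhi.
 assert (HS0 := HSb 0 ltac:(lra)). assert (HST := HSb T ltac:(lra)).
 pose proof (Rle_abs (Sf 0)). pose proof (Rle_abs (- Sf 0)). rewrite Rabs_Ropp in *.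
 pose proof (Rle_abs (Sf T)). pose proof (Rle_abs (- Sf T)). rewrite Rabs_Ropp in *.
 assert (Hmq : exp (-(2 * lam)) <= mu * qw mu N).
 { unfold mu, qw. apply mu_pow_lower; auto. unfold lam; lra. }
 assert (HK : lam * exp (-(2 * lam)) / (2 * (1 + B)) * Ef 0 <= K).
 { unfold K. 
   replace (lam * mu / 2 * qw mu N * Ef 0 / (1 + B)) with (lam / (2 * (1 + B)) * Ef 0 * (mu * qw mu N)) by (field; lra).
   replace (lam * exp (-(2 * lam)) / (2 * (1 + B)) * Ef 0) with (lam / (2 * (1 + B)) * Ef 0 * exp (-(2 * lam))) by (field; lra).
   apply Rmult_le_compat_l; auto. apply Rmult_le_pos; auto. unfold Rdiv. apply Rmult_le_pos. unfold lam; lra.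
   left; apply Rinv_0_lt_compat; lra. }
 fold Ef. fold lam. fold g.
 unfold zero in HPhi. simpl in HPhi.
 assert (K * T >= lam * exp (-(2 * lam)) / (2 * (1 + B)) * Ef 0 * T) by nra.
 change (En N h al (xs N u 0) (xs N du 0)) with (Ef 0).
 set (c := lam * exp (- (2 * lam)) / (2 * (1 + B))) in *.
 replace ((c * T - 2) * Ef 0) with (c * Ef 0 * T - 2 * Ef 0) by ring.
 replace (Sf 0 + 0 - K * 0) with (Sf 0) in HPhi by ring.
 lra.
Qed.


Lemma fst_ext N (u : nat -> R -> C) j t : fst (ext N (fun k => u k t) j) = eT N (fun k t => fst (u k t)) j t.
Proof. unfold ext, eT. destruct (andb _ _); reflexivity. Qed.
Lemma snd_ext N (u : nat -> R -> C) j t : snd (ext N (fun k => u k t) j) = eT N (fun k t => snd (u k t)) j t.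
Proof. unfold ext, eT. destruct (andb _ _); reflexivity. Qed.

Lemma eT_in N (u : nat -> R -> R) j t : (1 <= j <= N)%nat -> eT N u j t = u j t.
Proof. intros H. unfold eT. replace (andb (Nat.leb 1 j) (Nat.leb j N)) with true; auto.
 symmetry. apply Bool.andb_true_iff. split; apply Nat.leb_le; lia. Qed.

Lemma eq_re N a (u ddu : nat -> R -> C) t k :
  fst (Cplus (Cplus (Mop N (fun k => ddu k t) (S k)) (Kop N (fun k => u k t) (S k))) (Lop N a (fun k => u k t) (S k)))
  = eqexpr (hN N) (fun k => a (INR (S k) * hN N)) (xs N (fun j t => fst (u j t)) t) (xs N (fun j t => fst (ddu j t)) t) k.
Proof. unfold Mop, Kop, Lop, eqexpr, xs.
 replace (S k - 1)%nat with k by lia. replace (S k + 1)%nat with (S (S k)) by lia.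
 cbn [Cplus Cmult Cminus Copp RtoC fst snd].
 rewrite !fst_ext, !snd_ext. ring.
Qed.

Lemma eq_im N a (u ddu : nat -> R -> C) t k :
  snd (Cplus (Cplus (Mop N (fun k => ddu k t) (S k)) (Kop N (fun k => u k t) (S k))) (Lop N a (fun k => u k t) (S k)))
  = eqexpr (hN N) (fun k => a (INR (S k) * hN N)) (xs N (fun j t => snd (u j t)) t) (xs N (fun j t => snd (ddu j t)) t) k.
Proof. unfold Mop, Kop, Lop, eqexpr, xs.
 replace (S k - 1)%nat with k by lia. replace (S k + 1)%nat with (S (S k)) by lia.
 cbn [Cplus Cmult Cminus Copp RtoC fst snd].
 rewrite !fst_ext, !snd_ext. ring.
Qed.

Lemma csum_re f n : fst (csum f n) = lsum (fun k => fst (f (S k))) n.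
Proof. induction n; cbn [csum lsum]. reflexivity. rewrite <- IHn. reflexivity. Qed.

Lemma csum_ext f g n : (forall j, (1 <= j <= n)%nat -> f j = g j) -> csum f n = csum g n.
Proof. induction n; intros H; cbn [csum]; auto. rewrite IHn, H; auto; try lia. intros; apply H; lia. Qed.

Lemma ext_eq N U V : (forall j, (1 <= j <= N)%nat -> U j = V j) -> forall j, ext N U j = ext N V j.
Proof. intros H j. unfold ext. destruct (andb (Nat.leb 1 j) (Nat.leb j N)) eqn:E; auto.
 apply Bool.andb_true_iff in E. destruct E as [E1 E2]. apply Nat.leb_le in E1, E2. apply H. lia. Qed.

Lemma norm1_eq N a U V : (forall j, (1 <= j <= N)%nat -> U j = V j) -> norm1_sq N a U = norm1_sq N a V.
Proof. intros H. unfold norm1_sq, cinner. f_equal. apply csum_ext. intros j Hj.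
 unfold Kop, Lop. rewrite !(ext_eq N U V H). rewrite (H j Hj). reflexivity. Qed.

Lemma normM_eq N U V : (forall j, (1 <= j <= N)%nat -> U j = V j) -> normM_sq N U = normM_sq N V.
Proof. intros H. unfold normM_sq, cinner. f_equal. apply csum_ext. intros j Hj.
 unfold Mop. rewrite !(ext_eq N U V H). rewrite (H j Hj). reflexivity. Qed.

Lemma norm1_real N a (u : nat -> R -> C) :
  norm1_sq N a (fun k => u k 0) =
  lsum (fun k => (/ hN N * (2 * xs N (fun j t => fst (u j t)) 0 (S k) - xs N (fun j t => fst (u j t)) 0 k
        - xs N (fun j t => fst (u j t)) 0 (S (S k))) + hN N * a (INR (S k) * hN N) * xs N (fun j t => fst (u j t)) 0 (S k))
        * xs N (fun j t => fst (u j t)) 0 (S k)) N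
  + lsum (fun k => (/ hN N * (2 * xs N (fun j t => snd (u j t)) 0 (S k) - xs N (fun j t => snd (u j t)) 0 k
        - xs N (fun j t => snd (u j t)) 0 (S (S k))) + hN N * a (INR (S k) * hN N) * xs N (fun j t => snd (u j t)) 0 (S k))
        * xs N (fun j t => snd (u j t)) 0 (S k)) N.
Proof. unfold norm1_sq, cinner, Re. rewrite csum_re, <- lsum_plus. apply lsum_ext. intros k Hk.
 unfold Kop, Lop, xs.
 replace (S k - 1)%nat with k by lia. replace (S k + 1)%nat with (S (S k)) by lia.
 cbn [Cplus Cmult Cminus Copp RtoC Cconj fst snd].
 rewrite !fst_ext, !snd_ext. rewrite !(eT_in N _ (S k)) by lia. ring.
Qed.

Lemma normM_real N (u : nat -> R -> C) :
  normM_sq N (fun k => u k 0) =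
  lsum (fun k => hN N / 4 * (xs N (fun j t => fst (u j t)) 0 k + 2 * xs N (fun j t => fst (u j t)) 0 (S k)
        + xs N (fun j t => fst (u j t)) 0 (S (S k))) * xs N (fun j t => fst (u j t)) 0 (S k)) N
  + lsum (fun k => hN N / 4 * (xs N (fun j t => snd (u j t)) 0 k + 2 * xs N (fun j t => snd (u j t)) 0 (S k)
        + xs N (fun j t => snd (u j t)) 0 (S (S k))) * xs N (fun j t => snd (u j t)) 0 (S k)) N.
Proof. unfold normM_sq, cinner, Re. rewrite csum_re, <- lsum_plus. apply lsum_ext. intros k Hk.
 unfold Mop, xs.
 replace (S k - 1)%nat with k by lia. replace (S k + 1)%nat with (S (S k)) by lia.
 cbn [Cplus Cmult Cminus Copp RtoC Cconj fst snd].
 rewrite !fst_ext, !snd_ext. rewrite !(eT_in N _ (S k)) by lia. ring.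
Qed.

Lemma re_der (f : R -> C) t l : is_derive f t l -> is_derive (fun t => fst (f t)) t (fst l).
Proof.
intros H. unfold is_derive in *.
pose proof (filterdiff_comp' f (fun z : C_R_NormedModule => fst z) t _ _ H (filterdiff_linear _ is_linear_fst)) as H2.
simpl in H2. eapply filterdiff_ext_lin. exact H2. intros y. simpl. reflexivity.
Qed.
Lemma im_der (f : R -> C) t l : is_derive f t l -> is_derive (fun t => snd (f t)) t (snd l).
Proof.
intros H. unfold is_derive in *.
pose proof (filterdiff_comp' f (fun z : C_R_NormedModule => snd z) t _ _ H (filterdiff_linear _ is_linear_snd)) as H2.
simpl in H2. eapply filterdiff_ext_lin. exact H2. intros y. simpl. reflexivity.
Qed.

Lemma g_cont N h u du ddu : (forall j t, (1 <= j <= N)%nat -> is_derive (u j) t (du j t)) ->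
  (forall j t, (1 <= j <= N)%nat -> is_derive (du j) t (ddu j t)) ->
  forall t, continuous (fun t => (eT N u 1 t / h) ^ 2 + (eT N du 1 t / 2) ^ 2) t.
Proof. intros H H' t. apply (ex_derive_continuous (K:=R_AbsRing) (V:=R_NormedModule)). auto_derive.
 repeat split; first [eapply eT_ex; eassumption | idtac]. Qed.

Lemma Cmod_sq z : Cmod z ^ 2 = fst z ^ 2 + snd z ^ 2.
Proof. unfold Cmod. rewrite pow2_sqrt; auto. nra. Qed.

Lemma En_nonneg N h al x v : 0 < h -> INR N * h <= 1 -> (forall k, (k < N)%nat -> 0 <= al k) -> 0 <= En N h al x v.
Proof. intros Hh HN Hal. unfold En, E0.
 assert (0 <= lsum (Fc h x v) (S N)) by (apply lsum_nonneg; intros; apply Fc_nonneg).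
 assert (0 <= lsum (fun k => al k * x (S k) ^ 2) N).
 { apply lsum_nonneg. intros k Hk. pose proof (Hal k Hk). nra. }
 assert (0 <= h * lsum (Fc h x v) (S N)) by nra.
 assert (0 <= h / 2 * lsum (fun k => al k * x (S k) ^ 2) N) by (apply Rmult_le_pos; lra).
 lra.
Qed.


Lemma sq_div (z : C) (h : R) : (Cmod z / h)^2 = (fst z / h)^2 + (snd z / h)^2.
Proof. unfold Rdiv. rewrite !Rpow_mult_distr, Cmod_sq. ring. Qed.

Theorem theorem1 :
  forall a : R -> R,
    measurable_on_01 a ->
    (exists B : R, forall x, 0 <= x <= 1 -> Rabs (a x) <= B) ->
    (forall x, 0 <= x <= 1 -> 0 <= a x) ->
    exists T0 kappa0 : R, 0 < T0 /\ 0 < kappa0 /\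
      forall (N : nat), (1 <= N)%nat ->
      forall T : R, T0 < T ->
      forall (U0 U1 : nat -> C) (u du ddu : nat -> R -> C),
        is_solution N a T U0 U1 u du ddu ->
        observation N T u du >= kappa0 * (norm1_sq N a U0 + normM_sq N U1).
Proof.
 intros a _ [B HB] Hpos.
 assert (HB0 : 0 <= B) by (pose proof (HB 0 ltac:(lra)); pose proof (Rabs_pos (a 0)); lra).
 assert (Ha : forall x, 0 <= x <= 1 -> 0 <= a x <= B).
 { intros x Hx. split; auto. pose proof (HB x Hx). pose proof (Rle_abs (a x)). lra. }
 set (lam := 4 * B + 4).
 set (c := lam * exp (-(2 * lam)) / (2 * (1 + B))).
 assert (Hc : 0 < c).
 { unfold c, Rdiv. apply Rmult_lt_0_compat. apply Rmult_lt_0_compat. unfold lam; lra. apply exp_pos.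
   apply Rinv_0_lt_compat; lra. }
 exists (4 / c), 1. split; [unfold Rdiv; apply Rmult_lt_0_compat; [lra|apply Rinv_0_lt_compat; auto]|].
 split; [lra|].
 intros N HN T HT U0 U1 u du ddu [Hd1 [Hd2 [Heq Hinit]]].
 assert (HT0 : 0 < T) by (assert (0 < 4 / c) by (unfold Rdiv; apply Rmult_lt_0_compat; [lra|apply Rinv_0_lt_compat; auto]); lra).
 assert (HcT : 4 < c * T).
 { apply Rmult_lt_compat_l with (r := c) in HT; auto. replace (c * (4 / c)) with 4 in HT by (field; lra). lra. }
 set (ur := fun j t => fst (u j t)). set (dur := fun j t => fst (du j t)). set (ddur := fun j t => fst (ddu j t)).
 set (ui := fun j t => snd (u j t)). set (dui := fun j t => snd (du j t)). set (ddui := fun j t => snd (ddu j t)).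
 assert (R1 : forall j t, (1 <= j <= N)%nat -> is_derive (ur j) t (dur j t)) by (intros; apply re_der; auto).
 assert (R2 : forall j t, (1 <= j <= N)%nat -> is_derive (dur j) t (ddur j t)) by (intros; apply re_der; auto).
 assert (I1' : forall j t, (1 <= j <= N)%nat -> is_derive (ui j) t (dui j t)) by (intros; apply im_der; auto).
 assert (I2' : forall j t, (1 <= j <= N)%nat -> is_derive (dui j) t (ddui j t)) by (intros; apply im_der; auto).
 assert (Req : forall t, 0 < t < T -> forall k, (k < N)%nat ->
    eqexpr (hN N) (fun k => a (INR (S k) * hN N)) (xs N ur t) (xs N ddur t) k = 0).
 { intros t Ht k Hk. unfold ur, ddur. rewrite <- eq_re. rewrite (Heq t Ht (S k) ltac:(lia)). reflexivity. }
 assert (Ieq : forall t, 0 < t < T -> forall k, (k < N)%nat ->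
    eqexpr (hN N) (fun k => a (INR (S k) * hN N)) (xs N ui t) (xs N ddui t) k = 0).
 { intros t Ht k Hk. unfold ui, ddui. rewrite <- eq_im. rewrite (Heq t Ht (S k) ltac:(lia)). reflexivity. }
 pose proof (real_main N a B T ur dur ddur HN HB0 Ha HT0 R1 R2 Req) as Hre.
 pose proof (real_main N a B T ui dui ddui HN HB0 Ha HT0 I1' I2' Ieq) as Him.
 fold lam in Hre, Him. fold c in Hre, Him.
 destruct (hN_facts N) as [Hh [HNh HNh']].
 set (h := hN N) in *.
 set (al := fun k => a (INR (S k) * h)) in *.
 assert (Hal : forall k, (k < N)%nat -> 0 <= al k).
 { intros k Hk. unfold al. apply Ha. split.
   - apply Rmult_le_pos; [apply pos_INR | lra].
   - apply Rle_trans with (INR N * h); auto. apply Rmult_le_compat_r; [lra|]. apply le_INR; lia. }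
 unfold observation. fold h.
 rewrite (RInt_ext _ (fun t => ((eT N ur 1 t / h) ^ 2 + (eT N dur 1 t / 2) ^ 2) + ((eT N ui 1 t / h) ^ 2 + (eT N dui 1 t / 2) ^ 2))).
 2: { intros t _. rewrite !eT_in by lia. unfold ur, dur, ui, dui.
      match goal with |- ?A = ?B => change (@eq R A B) end. rewrite !sq_div. ring. }
 rewrite (RInt_plus (V:=R_CompleteNormedModule)).
 2: { apply (ex_RInt_continuous (V:=R_CompleteNormedModule)). intros; eapply g_cont; eauto. }
 2: { apply (ex_RInt_continuous (V:=R_CompleteNormedModule)). intros; eapply g_cont; eauto. }
 rewrite (norm1_eq N a U0 (fun k => u k 0)) by (intros j Hj; symmetry; apply Hinit; auto).
 rewrite (normM_eq N U1 (fun k => du k 0)) by (intros j Hj; symmetry; apply Hinit; auto).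
 rewrite norm1_real, normM_real.
 fold h. fold ur ui dur dui.
 pose proof (energy_node N h al (xs N ur 0) (xs N dur 0) Hh eq_refl (eT_SN N ur 0) eq_refl (eT_SN N dur 0)) as E1.
 pose proof (energy_node N h al (xs N ui 0) (xs N dui 0) Hh eq_refl (eT_SN N ui 0) eq_refl (eT_SN N dui 0)) as E2.
 unfold al in E1, E2. cbv beta in E1, E2.
 pose proof (En_nonneg N h al (xs N ur 0) (xs N dur 0) Hh HNh' Hal).
 pose proof (En_nonneg N h al (xs N ui 0) (xs N dui 0) Hh HNh' Hal).
 match goal with |- plus ?A ?B >= ?C => change (A + B >= C) end.
 change (fun k : nat => a (INR (S k) * h)) with al in E1, E2.
 set (Er := En N h al (xs N ur 0) (xs N dur 0)) in *.
 set (Ei := En N h al (xs N ui 0) (xs N dui 0)) in *.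
 assert ((c * T - 2) * Er >= 2 * Er) by nra.
 assert ((c * T - 2) * Ei >= 2 * Ei) by nra.
 lra.
Qed.
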